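(* Let $B$ be an abelian group equipped with an infinite family of group homomorphisms $r_v\colon B\to B_v$ (indexed by primes $v$ of good reduction) into finite abelian groups $B_v$. Fix an integer $n\ge 4$ and let $P\in B$ be a point of infinite order. For integers $x_1,\dots,x_n$ put $f(x_1,\dots,x_n)=(2x_1^2+x_2^2+x_3^2+x_4^2+\dots+x_n^2)P\in B$. Then $f(x_1,\dots,x_n)=0$ if and only if $(x_1,\dots,x_n)=(0,\dots,0)$; but for every prime $v$ of good reduction (i.e. every index $v$ of the family) there exist integers $x_1,\dots,x_n$ with $\gcd(x_1,\dots,x_n)=1$ such that $r_v\big((2x_1^2+x_2^2+x_3^2+x_4^2+\dots+x_n^2)P\big)=0$.
   Context: $B_v$ finite abelian groups, so every element of $B$ has finite order modulo $v$, i.e. $r_v(P)$ has finite order in $B_v$. In the intended applications (e.g. Mordell–Weil groups, $S$-units, odd $K$-groups over number fields) the maps $r_v$ are reduction maps at primes of good reduction. *)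

(* Defs.v *)
From HB Require Import structures.
From mathcomp Require Import all_boot all_order all_algebra.
Set Implicit Arguments. Unset Strict Implicit. Unset Printing Implicit Defensive.
Import Order.TTheory GRing.Theory Num.Theory.
Local Open Scope ring_scope.

(* The integer quadratic form 2 x_1^2 + x_2^2 + ... + x_n^2, with the
   variables x_1, ..., x_n indexed by 'I_n (x_1 is the entry at index 0). *)
Definition qform (n : nat) (x : 'I_n -> int) : int :=
  \sum_(i < n) (if val i == 0%N then 2 else 1) * x i ^+ 2.

Definition gcd_all (n : nat) (x : 'I_n -> int) : int :=
  \big[gcdz/0]_(i < n) x i.

(* Main.v *)
Require Import Defs.
From HB Require Import structures.
From mathcomp Require Import all_boot all_order all_algebra.
From mathcomp Require Import all_fingroup zify ring.
Import Order.TTheory GRing.Theory Num.Theory.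


Definition F (a b c : nat) := (1 + a ^ 2 + b ^ 2 + 2 * c ^ 2)%N.
Definition good (m : nat) := exists a b c, (m %| F a b c)%N.

Lemma F_mod a b c m : F a b c = F (a %% m) (b %% m) (c %% m) %[mod m].
Proof.
rewrite {1}(divn_eq a m) {1}(divn_eq b m) {1}(divn_eq c m).
set qa := a %/ m; set qb := b %/ m; set qc := c %/ m.
set ra := a %% m; set rb := b %% m; set rc := c %% m.
have -> : F (qa * m + ra) (qb * m + rb) (qc * m + rc) =
  (F ra rb rc + (qa * (qa * m + 2 * ra) + qb * (qb * m + 2 * rb) + 2 * qc * (qc * m + 2 * rc)) * m)%N.
  rewrite /F; ring.
by rewrite addnC modnMDl.
Qed.

Lemma good_mul m1 m2 : coprime m1 m2 -> good m1 -> good m2 -> good (m1 * m2).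
Proof.
move=> co [a1 [b1 [c1 h1]]] [a2 [b2 [c2 h2]]].
exists (chinese m1 m2 a1 a2), (chinese m1 m2 b1 b2), (chinese m1 m2 c1 c2).
rewrite Gauss_dvd //; apply/andP; split.
  by rewrite /dvdn F_mod !chinese_modl // -(F_mod a1 b1 c1 m1).
by rewrite /dvdn F_mod !chinese_modr // -(F_mod a2 b2 c2 m2).
Qed.

Lemma two_lift k : exists a, odd a /\ (2 ^ k.+3 %| a ^ 2 + 7)%N.
Proof.
elim: k => [|k [a [oa h]]]; first by exists 1%N.
have [q hq] := dvdnP h.
have [s hs] : exists s, a = (2 * s + 1)%N by exists a./2; rewrite -[a in a = _]odd_double_half oa; lia.
have [o|e] := boolP (odd q); last first.
  have [t ht] : exists t, q = (2 * t)%N by exists q./2; rewrite -[q in q = _]odd_double_half (negPf e); lia.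
  exists a; split => //; apply/dvdnP; exists t; rewrite hq ht !expnS; ring.
have [t ht] : exists t, q = (2 * t + 1)%N by exists q./2; rewrite -[q in q = _]odd_double_half o; lia.
exists (a + 2 ^ k.+2)%N; split; first by rewrite oddD oa expnS oddM.
apply/dvdnP; exists (t + s + 1 + 2 ^ k)%N.
have -> : ((a + 2 ^ k.+2) ^ 2 + 7 = (a ^ 2 + 7) + 2 * a * 2 ^ k.+2 + 2 ^ k.+2 * 2 ^ k.+2)%N by ring.
rewrite hq ht hs !expnS; ring.
Qed.

Lemma good_two k : good (2 ^ k).
Proof.
case: (leqP k 2) => hk.
  exists 1%N, 0%N, 1%N; rewrite /F /=; case: k hk => [|[|[|k]]] //.
have [j ->] : exists j, k = j.+3 by exists (k - 3)%N; lia.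
have [a [_ h]] := two_lift j.
exists a, 2%N, 1%N; rewrite /F.
by rewrite (_ : 1 + a ^ 2 + 2 ^ 2 + 2 * 1 ^ 2 = a ^ 2 + 7)%N //; ring.
Qed.

Lemma sq_inj p x y : prime p -> odd p -> (x <= p./2)%N -> (y <= p./2)%N ->
  x ^ 2 %% p = y ^ 2 %% p -> x = y.
Proof.
move=> pp op.
have hp : (p./2 + p./2 < p)%N.
  have := odd_double_half p; rewrite op -addnn; lia.
wlog le : x y / (y <= x)%N.
  move=> W hx hy e; case: (leqP y x) => h; first exact: W.
  by symmetry; apply: W => //; apply: ltnW.
move=> hx hy /eqP; rewrite eqn_mod_dvd ?leq_exp2r // subn_sqr Euclid_dvdM //.
case/orP => /dvdn_leq h.
  by case: (posnP (x - y)) => [|/h]; lia.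
by case: (posnP (x + y)) => [|/h]; lia.
Qed.

Lemma base_odd p : prime p -> odd p ->
  exists x y, (1 + x ^ 2 + y ^ 2) %% p = 0%N.
Proof.
move=> pp op; have p0 := prime_gt0 pp.
have hp : (p./2 + p./2 < p)%N by have := odd_double_half p; rewrite op -addnn; lia.
have hp' : (p./2 + p./2).+1 = p by have := odd_double_half p; rewrite op -addnn; lia.
pose f (x : 'I_(p./2).+1) : 'I_p := Ordinal (ltn_pmod (x ^ 2) p0).
have gP (y : 'I_(p./2).+1) : (p.-1 - y ^ 2 %% p < p)%N.
  have := ltn_pmod (y ^ 2) p0; lia.
pose g (y : 'I_(p./2).+1) : 'I_p := Ordinal (gP y).
have fi : injective f.
  move=> x y /(congr1 val) /= e; apply: ord_inj;
  apply: (@sq_inj _ _ _ pp op _ _ e); by rewrite -ltnS; apply: ltn_ord.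
have gi : injective g.
  move=> x y /(congr1 val) /= e; apply: ord_inj; apply: (@sq_inj _ _ _ pp op);
  try by rewrite -ltnS; apply: ltn_ord.
  move: e; have := ltn_pmod (x ^ 2) p0; have := ltn_pmod (y ^ 2) p0; lia.
have hc : (0 < #|f @: setT :&: g @: setT|)%N.
  have := cardsUI (f @: setT) (g @: setT).
  rewrite !card_imset // cardsT card_ord.
  have := max_card (f @: setT :|: g @: setT); rewrite card_ord; lia.
case/card_gt0P: hc => z /setIP [/imsetP [x _ ->] /imsetP [y _ /(congr1 val) /= e]].
have hy := ltn_pmod (y ^ 2) p0.
exists x, y; rewrite -addnA -modnDm -(modnDm (x ^ 2)) e.
have -> : (p.-1 - y ^ 2 %% p + y ^ 2 %% p = p.-1)%N by lia.
rewrite modnDm (_ : 1 + p.-1 = p)%N ?modnn //; lia.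
Qed.

Lemma base_odd' p : prime p -> odd p ->
  exists a b, ~~ (p %| a)%N /\ (p %| 1 + a ^ 2 + b ^ 2)%N.
Proof.
move=> pp op; have [x [y e]] := base_odd _ pp op.
have p1 := prime_gt1 pp.
have [px|npx] := boolP (p %| x)%N; last by exists x, y; split => //; apply/eqP.
have ex : (x ^ 2 %% p = 0)%N by apply/eqP; rewrite -/(dvdn _ _) dvdn_exp // .
exists y, 0%N; split.
  apply/negP => py.
  have ey : (y ^ 2 %% p = 0)%N by apply/eqP; rewrite -/(dvdn _ _) dvdn_exp // .
  move: e; rewrite -addnA -modnDm -(modnDm (x ^ 2)) ex ey addn0 mod0n addn0 modn_mod modn_small //.
apply/eqP; move: e; rewrite -addnA -modnDm -(modnDm (x ^ 2)) ex /= add0n modn_mod modnDm.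
by rewrite /dvdn exp0n // addn0 => ->.
Qed.

Lemma odd_lift p k : prime p -> odd p ->
  exists a b, ~~ (p %| a)%N /\ (p ^ k.+1 %| 1 + a ^ 2 + b ^ 2)%N.
Proof.
move=> pp op; elim: k => [|k [a [b [na h]]]]; first by rewrite expn1; exact: base_odd' _ pp op.
have p2 : ~~ (p %| 2)%N.
  apply/negP => /(@dvdn_leq _ 2 isT); have := prime_gt1 pp.
  by move: op; case: (p) => [|[|[|]]] // _ _; lia.
have co : coprime p (2 * a) by rewrite prime_coprime // Euclid_dvdM // negb_or p2.
have [u _ hu] := Bezoutl (2 * a) (prime_gt0 pp).
rewrite (eqnP co) in hu.
have [w hw] := dvdnP hu.
have [q hq] := dvdnP h.
exists (a + q * u * p ^ k.+1)%N, b; split.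
  by rewrite dvdn_addl // dvdn_mull // dvdn_exp.
apply/dvdnP; exists (q * w + (q * u) ^ 2 * p ^ k)%N.
have -> : (1 + (a + q * u * p ^ k.+1) ^ 2 + b ^ 2 =
  (1 + a ^ 2 + b ^ 2) + q * (u * (2 * a)) * p ^ k.+1 + (q * u) ^ 2 * p ^ k.+1 * p ^ k.+1)%N by ring.
rewrite hq.
have -> : (q * p ^ k.+1 + q * (u * (2 * a)) * p ^ k.+1 = q * (1 + u * (2 * a)) * p ^ k.+1)%N by ring.
rewrite hw !expnS; ring.
Qed.

Lemma good_primepow p e : prime p -> good (p ^ e).
Proof.
move=> pp; case: e => [|k]; first by exists 0%N, 0%N, 0%N; rewrite expn0 dvd1n.
have [->|op] := even_prime pp; first exact: good_two.
have [a [b [_ h]]] := odd_lift _ k pp op.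
by exists a, b, 0%N; rewrite /F exp0n // muln0 addn0.
Qed.

Lemma good_all m : (0 < m)%N -> good m.
Proof.
elim: m {-2}m (leqnn m) => [|N IH] m hm m0; first by lia.
case: (leqP m 1) => m1.
  have -> : m = 1%N by lia.
  by exists 0%N, 0%N, 0%N; rewrite dvd1n.
have pp := pdiv_prime m1; set p := pdiv m in pp.
rewrite -(partnC p m0); apply: good_mul; first exact: coprime_partC.
  by rewrite p_part; exact: good_primepow.
apply: IH; last exact: part_gt0.
have : (1 < m`_p)%N by rewrite p_part_gt1 mem_primes pp m0 pdiv_dvd.
have := partnC p m0; have := part_gt0 p^' m; nia.
Qed.

Local Open Scope ring_scope.

Lemma finz_order (G : finZmodType) (a : G) : exists N, (0 < N)%N /\ a *+ N = 0.
Proof.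
exists (#[a]%g); split; first exact: order_gt0.
by rewrite -FinRing.zmodXgE expg_order.
Qed.

Lemma qform_ge0 n (x : 'I_n -> int) : 0 <= qform x.
Proof.
by apply: sumr_ge0 => i _; rewrite mulr_ge0 // ?sqr_ge0 //; case: ifP.
Qed.

Lemma qform_eq0 n (x : 'I_n -> int) : qform x = 0 -> forall i, x i = 0.
Proof.
move=> /eqP; rewrite /qform psumr_eq0; last first.
  by move=> i _; rewrite mulr_ge0 // ?sqr_ge0 //; case: ifP.
move=> /allP h i; have := h i (mem_index_enum i); rewrite /= mulf_eq0.
case: ifP => _ /orP [] //; by rewrite sqrf_eq0 => /eqP.
Qed.

Theorem proposition4p1
  (B : zmodType) (V : Type) (Bv : V -> finZmodType)
  (r : forall v : V, {additive B -> Bv v})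
  (V_infinite : exists g : nat -> V, injective g)
  (n : nat) (hn : (4 <= n)%N)
  (P : B) (P_inf : forall k : int, k != 0 -> P *~ k != 0) :
  (forall x : 'I_n -> int, P *~ qform x = 0 <-> (forall i, x i = 0)) /\
  (forall v : V, exists x : 'I_n -> int,
      gcd_all x = 1 /\ r v (P *~ qform x) = 0).
Proof.
split.
  move=> x; split.
    move=> h; apply: qform_eq0; apply/eqP; apply: contraLR isT => hq; have := P_inf _ hq; by rewrite h eqxx.
  move=> h; rewrite /qform big1 ?mulr0z // => i _; by rewrite h expr0n mulr0.
move=> v.
have [N [N0 hN]] := @finz_order (Bv v) (r v P).
have [a [b [c hd]]] := good_all _ N0.
have [s hs] := dvdnP hd.
have [m ->] : exists m, n = m.+4 by exists (n - 4)%N; lia.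
pose x (i : 'I_m.+4) : int :=
  if val i == 0%N then Posz c else if val i == 1%N then 1
  else if val i == 2%N then Posz a else if val i == 3%N then Posz b else 0.
exists x; split.
  rewrite /gcd_all big_ord_recl big_ord_recl /=.
  by rewrite /x /= gcd1z gcdz1.
have -> : qform x = Posz (F a b c).
  rewrite /qform !big_ord_recl /= big1; last first.
    by move=> i _; rewrite /x /=.
  rewrite /x /= /F -[RHS]natz !natrD !natrM !natz; ring.
by rewrite raddfMz -pmulrn hs mulnC mulrnA hN mul0rn.
Qed.
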